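(* Let $n>1$ be a prime power pseudoperfect number such that $n-1$ is prime. Then $n(n-1)$ is a prime power Giuga number.
   Context: A prime power pseudoperfect number is an integer $n>1$ satisfying $\sum_{p^k\mid n}\frac{1}{p^k}+\frac1n=1$, where the sum ranges over all prime powers $p^k$ ($p$ prime, $k\ge1$) dividing $n$. A prime power Giuga number is a composite positive integer $m$ such that $\sum_{p^k\mid m}\frac{1}{p^k}-\frac1m$ is a positive integer, the sum again over all prime powers $p^k$ ($k\ge1$) dividing $m$. *)

(* Defs.v *)
From mathcomp Require Import all_boot all_order all_algebra.
Set Implicit Arguments. Unset Strict Implicit. Unset Printing Implicit Defensive.
Import Order.TTheory GRing.Theory Num.Theory.

(* d is a prime power p^k with p prime and k >= 1 (witnesses bounded by d,
   which is no restriction since p <= d and k <= d). *)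
Definition prime_power (d : nat) : bool :=
  [exists p : 'I_d.+1, prime p &&
     [exists k : 'I_d.+1, (0 < (k : nat))%N && (d == (p : nat) ^ (k : nat))]].

Definition pp_recip_sum (n : nat) : rat :=
  (\sum_(d <- divisors n | prime_power d) (d%:R)^-1)%R.

Definition pp_pseudoperfect (n : nat) : Prop :=
  (1 < n)%N /\ (pp_recip_sum n + (n%:R)^-1 = 1)%R.

Definition pp_giuga (m : nat) : Prop :=
  (1 < m)%N /\ ~~ prime m /\
  exists k : nat, (0 < k)%N /\ (pp_recip_sum m - (m%:R)^-1 = (k%:R : rat))%R.

(* Main.v *)
Require Import Defs.
From mathcomp Require Import all_boot all_order all_algebra.
From mathcomp Require Import zify ring lra.
Import Order.TTheory GRing.Theory Num.Theory.

Lemma sum_range m N : (0 < m)%N -> (m < N)%N ->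
  pp_recip_sum m = (\sum_(0 <= d < N | (d %| m)%N && prime_power d) (d%:R)^-1 : rat)%R.
Proof.
move=> m0 mN; rewrite /pp_recip_sum -big_filter_cond.
apply: perm_big; apply: uniq_perm; first exact: divisors_uniq.
  by apply: filter_uniq; apply: iota_uniq.
move=> d; rewrite -dvdn_divisors // mem_filter mem_iota add0n /=.
case H: (d %| m) => //=; apply/esym; have := dvdn_leq m0 H; lia.
Qed.

Lemma pp_inv d : prime_power d -> exists r k, [/\ prime r, (0 < k)%N & d = r ^ k].
Proof.
case/existsP=> r /andP [pr /existsP [k /andP [k0 /eqP ->]]].
by exists r, k.
Qed.

Lemma pp_prime p : prime p -> prime_power p.
Proof.
move=> pp; apply/existsP; exists (Ordinal (ltnSn p)); rewrite /= pp /=.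
apply/existsP; have h1 : (1 < p.+1)%N by rewrite ltnS prime_gt0.
by exists (Ordinal h1); rewrite /= expn1 eqxx.
Qed.

Lemma pp_gt1 d : prime_power d -> (1 < d)%N.
Proof.
case/pp_inv=> r [k [pr k0 ->]].
by rewrite -(exp1n k) ltn_exp2r // prime_gt1.
Qed.

Lemma split_point n p d : prime p -> coprime n p -> (0 < n)%N ->
  ((d %| n * p) && prime_power d) =
  (((d %| n) && prime_power d) || (d == p)).
Proof.
move=> pp cop n0.
case ep: (d == p).
  move/eqP: ep => ->; rewrite orbT dvdn_mull //= pp_prime //.
rewrite orbF; case pd: (prime_power d); rewrite ?andbF ?andbT //.
apply/idP/idP; last by move=> h; apply: dvdn_mulr.
move=> h.
case cdp: (coprime d p); first by rewrite -(Gauss_dvdl n cdp).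
have [r [k [pr k0 dE]]] := @pp_inv d pd.
have rp : r = p.
  move: cdp; rewrite coprime_sym prime_coprime // => /negbFE.
  rewrite dE Euclid_dvdX // => /andP [pr' _].
  by apply/eqP; rewrite eq_sym -dvdn_prime2.
exfalso.
move: h; rewrite dE rp Gauss_dvdr; last by rewrite coprimeXl // coprime_sym.
case: k k0 dE => // [[|k]] _ dE.
idtac.
  by move: ep; rewrite dE rp expn1 eqxx.
move=> h; have := dvdn_leq (prime_gt0 pp) h.
by rewrite leqNgt -{1}(expn1 p) (ltn_exp2l _ _ (prime_gt1 pp)).
Qed.

Theorem proposition5 (n : nat) :
  pp_pseudoperfect n -> prime n.-1 -> pp_giuga (n * n.-1).
Proof.
move=> [n1 Hs] pp.
set p := n.-1 in pp *.
have np : n = p.+1 by rewrite /p; lia.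
have p1 := prime_gt1 pp.
have cop : coprime n p.
  by rewrite np coprimeSn.
have n0 : (0 < n)%N by lia.
split; first by rewrite np; nia.
split.
  apply/negP => /primeP [_ h].
  have := h n (dvdn_mulr _ (dvdnn n)); rewrite np; lia.
exists 1%N; split => //.
have pN : (p < (n * p).+1)%N by rewrite np; nia.
have nN : (n < (n * p).+1)%N by rewrite np; nia.
rewrite (@sum_range (n * p) (n * p).+1) ?muln_gt0 ?n0 ?prime_gt0 //.
rewrite (eq_bigl _ _ (fun d => @split_point n p d pp cop n0)).
have -> : (\sum_(0 <= d < (n * p).+1 | ((d %| n)%N && prime_power d) || (d == p))
             (d%:R)^-1 : rat)%R =
          (\sum_(0 <= d < (n * p).+1 | (d %| n)%N && prime_power d) (d%:R)^-1
           + \sum_(0 <= d < (n * p).+1 | d == p) (d%:R)^-1)%R.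
  rewrite [in RHS]big_mkcond [X in (_ + X)%R]big_mkcond /= -big_split /=.
  rewrite big_mkcond; apply: eq_bigr => d _.
  case e: (d == p); last by rewrite orbF addr0.
  move/eqP: e => ->; rewrite orbT /=.
  have -> : (p %| n) = false.
    apply/negP => h; have : p %| gcdn n p by rewrite dvdn_gcd h dvdnn.
    by rewrite (eqP cop) dvdn1 => /eqP e; move: p1; rewrite e.
  by rewrite add0r.
rewrite -(@sum_range n _ n0 nN).
rewrite big_nat1_eq pN.
have -> : pp_recip_sum n = (1 - n%:R^-1)%R by apply/eqP; rewrite eq_sym subr_eq Hs.
rewrite leq0n /= np -addn1 natrM natrD.
have hp : (p%:R : rat) != 0%R by rewrite pnatr_eq0; lia.
have hp1 : (p%:R + 1 : rat) != 0%R.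
  by apply: lt0r_neq0; have := ler0n rat p; lra.
field. by apply/andP; split.
Qed.
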